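(* Let $G=(V,E)$ be a planar graph with a fixed planar embedding, let $c,\delta,\varepsilon\in(0,1)$, let $k\ge1$ be an integer, and let $\ell$ be an integer with $\ell\ge 2k\delta^{-1}+2\varepsilon^{-1}-1$. Then for any $c$-maximum independent sets $S_1,\dots,S_k$ of $G$ there exists $p\in\{0,1,\dots,\ell\}$ such that simultaneously (i) $|S_h\cap L^p|\le(\delta/2)|S_h|$ for all $h\in[k]$, and (ii) $\sum_{i\ne j}|(S_i\cap L^p)\Delta(S_j\cap L^p)|\le(\varepsilon/2)\sum_{i\ne j}|S_i\Delta S_j|$.
   Context: Levels of vertices of an embedded planar graph: a vertex is at level 1 if it lies on the exterior face; inductively, vertices on the exterior face of the graph obtained after deleting all vertices of levels $1,\dots,i-1$ are at level $i$. For an integer $\ell\ge 0$ and $p\in\{0,\dots,\ell\}$, the $p$-th stratum $L^p$ is the set of vertices whose level is congruent to $p$ modulo $\ell+1$. A $c$-maximum independent set is an independent set $S$ with $|S|\ge c$ times the maximum size of an independent set of $G$. *)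

(* Defs.v *)
From mathcomp Require Import all_boot all_order all_algebra.
Set Implicit Arguments. Unset Strict Implicit. Unset Printing Implicit Defensive.
Import Order.TTheory GRing.Theory Num.Theory.

Definition independent (V : finType) (e : rel V) (S : {set V}) : bool :=
  [forall x in S, forall y in S, ~~ e x y].

Definition alpha (V : finType) (e : rel V) : nat :=
  \max_(S : {set V} | independent e S) #|S|.

Definition c_max_indep (R : numDomainType) (V : finType) (e : rel V)
  (c : R) (S : {set V}) : Prop :=
  independent e S /\ (c * (alpha e)%:R <= (#|S|)%:R)%R.

Definition symdiff (V : finType) (A B : {set V}) : {set V} :=
  (A :\: B) :|: (B :\: A).

Definition stratum (V : finType) (lvl : V -> nat) (l p : nat) : {set V} :=
  [set v | lvl v %% l.+1 == p].

(* A planar embedding is not available in the libraries; we keep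
   from it exactly the datum the definition of levels uses: an oracle
   [outer W] returning the vertices of the subgraph induced by W lying on the
   exterior face of the embedding of G[W] inherited from the fixed embedding
   of G.  The theorem only assumes that [outer W] is a subset of W, nonempty
   when W is nonempty (true for the exterior face of any plane graph). *)

Fixpoint remaining (V : finType) (outer : {set V} -> {set V}) (i : nat)
  : {set V} :=
  if i is i'.+1 then remaining outer i' :\: outer (remaining outer i')
  else [set: V].

(* level of v: v is at level i+1 iff it lies on the exterior face of the
   graph obtained after deleting levels 1..i *)
Definition level (V : finType) (outer : {set V} -> {set V}) (v : V) : nat :=
  (find (fun i => v \in outer (remaining outer i)) (iota 0 #|V|)).+1.

(* Main.v *)
Require Import Defs.
From mathcomp Require Import all_boot all_order all_algebra.
From mathcomp Require Import lra.
Import Order.TTheory GRing.Theory Num.Theory.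

Lemma count_bad (R : realFieldType) (n : nat) (g : 'I_n -> R) (t : R)
  (ht : (0 < t)%R) (hg : forall p, (0 <= g p)%R) :
  ((\sum_(p | (t * \sum_q g q < g p)%R) 1) * t < 1)%R.
Proof.
set T := (\sum_q g q)%R.
have T0 : (0 <= T)%R by apply: sumr_ge0.
case: (boolP [exists p, (t * T < g p)%R]) => [/existsP [p0 hp0] | hno].
- have h1 : (\sum_(p | (t * T < g p)%R) (t * T) < \sum_(p | (t * T < g p)%R) g p)%R.
    apply: ltr_sum => //; apply/hasP; exists p0 => //; exact: mem_index_enum.
  have h2 : (\sum_(p | (t * T < g p)%R) g p <= T)%R.
    rewrite [X in (_ <= X)%R](bigID (fun p => (t * T < g p)%R)) /=.
    rewrite lerDl; apply: sumr_ge0 => *; exact: hg.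
  have h3 : (\sum_(p | (t * T < g p)%R) (t * T) = (\sum_(p | (t * T < g p)%R) 1) * (t * T))%R.
    by rewrite mulr_suml; apply: eq_bigr => *; rewrite mul1r.
  rewrite h3 in h1.
  set N := (\sum_(p | (t * T < g p)%R) 1)%R in h1 *.
  nra.
- rewrite big_pred0 ?mul0r ?ltr01 // => p; apply/negP => hp.
  by move/existsP: hno; apply; exists p.
Qed.

Lemma part_sum (V : finType) (lvl : V -> nat) (l : nat) (A : {set V}) :
  (\sum_(p < l.+1) #|A :&: stratum lvl l p|)%N = #|A|.
Proof.
have E : forall p : 'I_l.+1, #|A :&: stratum lvl l p| = (\sum_(v in A) (lvl v %% l.+1 == p))%N.
  move=> p; rewrite -sum1_card.
  rewrite (eq_bigl (fun v => (v \in A) && (v \in stratum lvl l p))); last first.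
    by move=> v; rewrite inE.
  rewrite big_mkcondr /=; apply: eq_bigr => v _; rewrite /stratum inE.
  by case: (_ == _).
rewrite (eq_bigr _ (fun p _ => E p)) exchange_big /= -sum1_card.
apply: eq_bigr => v _.
have hlt : (lvl v %% l.+1 < l.+1)%N by rewrite ltn_pmod.
rewrite (bigD1 (Ordinal hlt)) //= eqxx big1 // => p hp.
case: eqP => // h; move: hp; rewrite -[p](@val_inj _ _ _ (Ordinal hlt)) ?eqxx //.
Qed.

Lemma symdiffI (V : finType) (A B C : {set V}) :
  symdiff (A :&: C) (B :&: C) = symdiff A B :&: C.
Proof.
apply/setP => v; rewrite /symdiff !inE.
by case: (v \in A); case: (v \in B); case: (v \in C).
Qed.

Theorem mainTheorem4 (R : realFieldType) (V : finType) (e : rel V)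
  (outer : {set V} -> {set V})
  (e_sym : symmetric e) (e_irr : irreflexive e)
  (outer_sub : forall W : {set V}, outer W \subset W)
  (outer_nonempty : forall W : {set V}, W != set0 -> outer W != set0)
  (c delta eps : R)
  (hc : (0 < c < 1)%R) (hdelta : (0 < delta < 1)%R) (heps : (0 < eps < 1)%R)
  (k l : nat) (hk : (1 <= k)%N)
  (hl : (2 * k%:R / delta + 2 / eps - 1 <= l%:R)%R)
  (S : 'I_k -> {set V})
  (hS : forall h, c_max_indep e c (S h)) :
  exists p : nat, (p <= l)%N /\
    (forall h : 'I_k,
        ((#|S h :&: stratum (level outer) l p|)%:R
           <= delta / 2 * (#|S h|)%:R)%R) /\
    ((\sum_(i < k) \sum_(j < k | i != j)
        (#|symdiff (S i :&: stratum (level outer) l p)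
                   (S j :&: stratum (level outer) l p)|)%:R
      <= eps / 2 * \sum_(i < k) \sum_(j < k | i != j)
                      (#|symdiff (S i) (S j)|)%:R)%R).
Proof.
set L := stratum (level outer) l.
set D := (\sum_(i < k) \sum_(j < k | i != j) (#|symdiff (S i) (S j)|)%:R : R)%R.
pose gh (h : 'I_k) (p : 'I_l.+1) := ((#|S h :&: L p|)%:R : R)%R.
pose g2 (p : 'I_l.+1) := (\sum_(i < k) \sum_(j < k | i != j)
        (#|symdiff (S i :&: L p) (S j :&: L p)|)%:R : R)%R.
have sgh : forall h, (\sum_p gh h p = (#|S h|)%:R)%R.
  by move=> h; rewrite /gh -natr_sum part_sum.
have sg2 : (\sum_p g2 p = D)%R.
  rewrite /g2 exchange_big /=; apply: eq_bigr => i _.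
  rewrite exchange_big /=; apply: eq_bigr => j _.
  rewrite -natr_sum; congr (_%:R)%R.
  rewrite (eq_bigr (fun p : 'I_l.+1 => #|symdiff (S i) (S j) :&: L p|)).
    by rewrite part_sum.
  by move=> p _; rewrite symdiffI.
have d2 : (0 < delta / 2)%R by lra.
have e2 : (0 < eps / 2)%R by lra.
pose bad (p : 'I_l.+1) := [exists h, (delta / 2 * \sum_q gh h q < gh h p)%R]
                          || (eps / 2 * \sum_q g2 q < g2 p)%R.
case: (boolP [exists p, ~~ bad p]) => [/existsP [p hp] | hno].
  exists p; split; first by rewrite -ltnS ltn_ord.
  move: hp; rewrite /bad negb_or => /andP [h1 h2].
  split.
    move=> h; move: h1; rewrite negb_exists => /forallP /(_ h).
    by rewrite sgh -leNgt.
  by move: h2; rewrite sg2 -leNgt.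
exfalso.
have Nh : forall h, ((\sum_(p | (delta / 2 * \sum_q gh h q < gh h p)%R) 1 : R) < 2 / delta)%R.
  move=> h; rewrite ltr_pdivlMr; last by lra.
  have := @count_bad R _ (gh h) (delta / 2) d2 (fun p => ler0n _ _). lra.
have N2 : ((\sum_(p | (eps / 2 * \sum_q g2 q < g2 p)%R) 1 : R) < 2 / eps)%R.
  rewrite ltr_pdivlMr; last by lra.
  have : forall p, (0 <= g2 p)%R.
    by move=> p; apply: sumr_ge0 => i _; apply: sumr_ge0 => j _; apply: ler0n.
  move=> g2p; have := @count_bad R _ g2 (eps / 2) e2 g2p. lra.
have key : ((l.+1)%:R <= \sum_h (\sum_(p | (delta / 2 * \sum_q gh h q < gh h p)%R) 1)
              + \sum_(p | (eps / 2 * \sum_q g2 q < g2 p)%R) (1 : R))%R.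
  have -> : ((l.+1)%:R = \sum_(p < l.+1) (1 : R))%R.
    by rewrite sumr_const card_ord.
  rewrite [X in (_ <= _ + X)%R]big_mkcond /=.
  rewrite [X in (_ <= X + _)%R](eq_bigr _ (fun h _ => big_mkcond _ _)) /=.
  rewrite exchange_big /= -big_split /=.
  apply: ler_sum => p _.
  move: hno; rewrite negb_exists => /forallP /(_ p); rewrite negbK /bad.
  have pos : forall h : 'I_k, (0 <= (if (delta / 2 * \sum_q gh h q < gh h p)%R then 1 else 0) :> R)%R.
    by move=> h; case: ifP.
  case/orP => [/existsP [h hh] | hb].
    rewrite (bigD1 h) //= hh -addrA lerDl; apply: addr_ge0.
      by apply: sumr_ge0 => i _.
    by case: ifP.
  rewrite hb lerDr; by apply: sumr_ge0 => i _.
have hsum : (\sum_(h < k) (\sum_(p | (delta / 2 * \sum_q gh h q < gh h p)%R) (1 : R))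
               < \sum_(h < k) (2 / delta))%R.
  apply: ltr_sum => //; apply/hasP; exists (Ordinal hk) => //; exact: mem_index_enum.
rewrite sumr_const card_ord in hsum.
have hkk : (k%:R * (2 / delta) = 2 * k%:R / delta :> R)%R by rewrite mulrA [(k%:R * 2)%R]mulrC.
rewrite -hkk mulr_natl in hl.
rewrite -natr1 in key.
lra.
Qed.
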